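(* Let $n\in\mathbb N$. Then $$\tau(\mathfrak P^{(n)}_1)=\tfrac12-\tfrac{1+3(-1)^n}{4n},\qquad \tau(\mathfrak P^{(n)}_i)=\tfrac12-\tfrac{1-(-1)^n}{4n}\ (i=2,3,4),$$ $$\tau(\mathfrak P^{(n)}_1\mathfrak P^{(n)}_i)=\tfrac13\left(1-\tfrac1n\right)\tau(\mathfrak P^{(n)}_1)\quad (i=2,3,4),$$ $$\tau(\mathfrak P^{(n)}_i\mathfrak P^{(n)}_j)=\tfrac12\left(1-\tfrac1n\right)\left(\tau(\mathfrak P^{(n)}_i)-\tfrac13\tau(\mathfrak P^{(n)}_1)\right)\quad (i,j\in\{2,3,4\},\ i\ne j).$$
   Context: $\tau=\frac1n\operatorname{tr}$ is the normalized trace on $M_n(\mathbb C)$. For $n\in\mathbb N$, $\mathfrak P^{(n)}_1,\dots,\mathfrak P^{(n)}_4\in M_n(\mathbb R)$ denote orthogonal projections (real symmetric idempotent matrices) such that (i) $\mathfrak P^{(n)}_1+\dots+\mathfrak P^{(n)}_4=(2-\frac1n)I_n$; (ii) $\operatorname{rk}\mathfrak P^{(n)}_1=\lfloor\frac n2\rfloor-(-1)^n$ and $\operatorname{rk}\mathfrak P^{(n)}_i=\lfloor\frac n2\rfloor$ for $i=2,3,4$; (iii) the only subspaces of $\mathbb C^n$ invariant under all four matrices are $0$ and $\mathbb C^n$. Such quadruples exist for every $n$, and any two of them are simultaneously unitarily equivalent; moreover, any quadruple of orthogonal projections on a Hilbert space summing to $(2-\frac1n)I$ with no nontrivial common invariant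 closed subspace is unitarily equivalent to one of the four cyclic shifts $(\mathfrak P^{(n)}_{\sigma(1)},\dots,\mathfrak P^{(n)}_{\sigma(4)})$, $\sigma$ a power of the cycle $(1\,2\,3\,4)$, and these four are pairwise inequivalent. *)

(* Defs.v *)
From HB Require Import structures.
From mathcomp Require Import all_boot all_order all_algebra.
From mathcomp Require Import reals.
From mathcomp.real_closed Require Import complex.
Set Implicit Arguments. Unset Strict Implicit. Unset Printing Implicit Defensive.
Import Order.TTheory GRing.Theory Num.Theory.
Local Open Scope ring_scope.

Definition ntrace (R : realType) (n : nat) (A : 'M[R]_n) : R := (\tr A) / n%:R.

Definition orth_proj (R : realType) (n : nat) (P : 'M[R]_n) : Prop :=
  P^T = P /\ P *m P = P.

Definition cplx (R : realType) (n : nat) (A : 'M[R]_n) : 'M[R[i]]_n :=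
  map_mx (fun x : R => (x%:C)%C) A.

(* A subspace of C^n is encoded as the row space of U (rows are the
   transposes of column vectors of C^n).  It is invariant under the matrix A
   (acting on column vectors x |-> A x) iff for every row v of the space,
   v *m A^T lies in the space, i.e. stablemx U A^T. *)
Definition invariant_sub (R : realType) (n : nat) (U : 'M[R[i]]_n) (A : 'M[R]_n)
  : bool := stablemx U (cplx A)^T.

Definition irreducible_family (R : realType) (n : nat) (k : nat)
  (P : 'I_k -> 'M[R]_n) : Prop :=
  forall U : 'M[R[i]]_n, (forall i, invariant_sub U (P i)) ->
    (U == (0 : 'M[R[i]]_n))%MS \/ (U == (1%:M : 'M[R[i]]_n))%MS.

(* Main.v *)
Require Import Defs.
From HB Require Import structures.
From mathcomp Require Import all_boot all_order all_algebra.
From mathcomp Require Import reals.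
From mathcomp.real_closed Require Import complex.
Import Order.TTheory GRing.Theory Num.Theory.
Local Open Scope ring_scope.
From mathcomp Require Import ring lra.
Set Implicit Arguments. Unset Strict Implicit. Unset Printing Implicit Defensive.
Lemma trace_idem (F : fieldType) n (P : 'M[F]_n) : P *m P = P -> \tr P = (\rank P)%:R.
Proof.
move=> PP.
move: (col_base P) (row_base P) (mulmx_base P) (row_base_free P) (col_base_full P) => C B eB Bf Cf.
have BC : B *m C = 1%:M.
  have h1 : C *m (B *m C) *m B = C *m 1%:M *m B.
    by rewrite mulmx1 !mulmxA eB -mulmxA eB PP.
  have h2 : C *m (B *m C) = C *m 1%:M.
    by apply: (row_free_inj Bf).
  apply: trmx_inj; apply: (row_free_inj (A := C^T)).
    by rewrite /row_free mxrank_tr.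
  by rewrite -!trmx_mul h2.
by rewrite -{1}eB mxtrace_mulC BC mxtrace1.
Qed.

Lemma tr_sym_idem0 (R : realFieldType) n (P : 'M[R]_n) : P^T = P -> P *m P = P -> \tr P = 0 -> P = 0.
Proof.
move=> Ps PP t0.
have : \tr (P *m P^T) = 0 by rewrite Ps PP.
rewrite /mxtrace.
under eq_bigr do rewrite !mxE.
move/eqP; rewrite psumr_eq0; last first.
  by move=> i _; apply: sumr_ge0 => j _; rewrite mxE -expr2 sqr_ge0.
move/allP=> h; apply/matrixP=> i j; rewrite mxE.
have := h i (mem_index_enum _); rewrite psumr_eq0; last first.
  by move=> k _; rewrite mxE -expr2 sqr_ge0.
move/allP=> h2; have := h2 j (mem_index_enum _).
by rewrite mxE -expr2 sqrf_eq0 => /eqP.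
Qed.
Lemma idx_eq (m i j a a' : nat) : (a < m)%N -> (a' < m)%N ->
  (i * m + a == j * m + a')%N = (i == j) && (a == a').
Proof.
move=> ha ha'; apply/eqP/andP => [h|[/eqP-> /eqP->]//].
have m0 : (0 < m)%N by apply: leq_ltn_trans ha.
have hij : i = j.
  have := congr1 (fun x => x %/ m)%N h => /=.
  by rewrite !divnMDl // !divn_small // !addn0.
by split; apply/eqP => //; move: h; rewrite hij => /addnI.
Qed.

Definition J (R : ringType) m (i : 'I_4) : 'M[R]_(m, 4 * m) :=
  \matrix_(a < m, b < 4 * m) ((b : nat) == i * m + a)%N%:R.

Lemma JJ (R : ringType) m (i j : 'I_4) :
  J R m i *m (J R m j)^T = if i == j then 1%:M else 0.
Proof.
apply/matrixP => a a'; rewrite !mxE.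
have hx : (i * m + a < 4 * m)%N.
  have := ltn_ord i; have := ltn_ord a => ha hi.
  rewrite mulSnr; apply: leq_ltn_trans (_ : 3 * m + a < 3 * m + m)%N; last by rewrite ltn_add2l.
  by rewrite leq_add2r leq_mul2r -ltnS hi orbT.
rewrite (bigD1 (Ordinal hx)) //= big1; last first.
  by move=> b hb; rewrite !mxE -val_eqE /= in hb *; rewrite (negbTE hb) mul0r.
rewrite !mxE /= eqxx mul1r addr0 idx_eq //.
change (((i == j) && (a == a'))%:R = (if i == j then 1%:M else 0 : 'M[R]_m) a a').
by case: (i == j); rewrite ?mxE.
Qed.
Lemma step (R : realFieldType) m (E : 'M[R]_m) (P : 'I_4 -> 'M[R]_m) (c : R) :
  c != 0 -> c != 1 ->
  (forall i, (P i)^T = P i) -> (forall i, P i *m P i = P i) ->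
  (forall i, E *m P i = P i) ->
  \sum_i P i = c *: E ->
  exists (E' : 'M[R]_(4 * m)) (Q : 'I_4 -> 'M[R]_(4 * m)),
   [/\ (forall i, (Q i)^T = Q i), (forall i, Q i *m Q i = Q i),
    (forall i, E' *m Q i = Q i),
    \tr E' = (c - 1) * \tr E & [/\ \sum_i Q i = (4 - c / (c - 1)) *: E',
    (forall i, \tr (Q i) = (c-1) * \tr E - \tr (P i)) &
    (forall i j, i != j -> \tr (Q i *m Q j) =
       (c-1) * \tr E - \tr (P i) - \tr (P j) + \tr (P i *m P j) / (c-1)^+2)]].
Proof.
move=> c0 c1 Ps PP EP sP.
have c1' : c - 1 != 0 by rewrite subr_eq0.
pose Jm := J R m.
pose W := \sum_i P i *m Jm i.
pose D := \sum_i (Jm i)^T *m P i *m Jm i.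
pose G := W^T *m W.
pose E' := D - c^-1 *: G.
have hWJ j : W *m (Jm j)^T = P j.
  rewrite mulmx_suml (bigD1 j) //= big1 => [|i hij].
    by rewrite -mulmxA JJ eqxx mulmx1 addr0.
  by rewrite -mulmxA JJ (negbTE hij) mulmx0.
have hJW j : Jm j *m W^T = P j by rewrite -[Jm j]trmxK -trmx_mul hWJ Ps.
have hWW : W *m W^T = c *: E.
  by rewrite mulmx_suml -sP; apply: eq_bigr => i _; rewrite -mulmxA hJW PP.
have hEW : E *m W = W.
  by rewrite mulmx_sumr; apply: eq_bigr => i _; rewrite mulmxA EP.
have hJD j : Jm j *m D = P j *m Jm j.
  rewrite mulmx_sumr (bigD1 j) //= big1 => [|i hij].
    by rewrite !mulmxA JJ eqxx mul1mx addr0.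
  by rewrite !mulmxA JJ eq_sym (negbTE hij) !mul0mx.
have hWD : W *m D = W.
  by rewrite mulmx_suml; apply: eq_bigr => i _; rewrite -mulmxA hJD mulmxA PP.
have hDt : D^T = D.
  rewrite /D raddf_sum; apply: eq_bigr => i _.
  by rewrite /= !trmx_mul trmxK Ps mulmxA.
have hGt : G^T = G by rewrite /G trmx_mul trmxK.
have hDW : D *m W^T = W^T by rewrite -hDt -trmx_mul hWD.
have hDG : D *m G = G by rewrite /G mulmxA hDW.
have hGD : G *m D = G by rewrite /G -mulmxA hWD.
have hDD : D *m D = D.
  rewrite {1}/D mulmx_suml; apply: eq_bigr => i _.
  by rewrite -mulmxA hJD mulmxA -(mulmxA _ (P i) (P i)) PP.
have hGG : G *m G = c *: G.
  by rewrite /G mulmxA -(mulmxA _ W) hWW -scalemxAr -scalemxAl -mulmxA hEW.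
have hE't : E'^T = E' by rewrite /E' linearB /= linearZ /= hDt hGt.
have hE'E' : E' *m E' = E'.
  rewrite /E' mulmxBl !mulmxBr -!scalemxAl -!scalemxAr hDD hDG hGD hGG.
  by rewrite !scalerA -mulrA mulVf // mulr1 subrr subr0.
have hDE' : D *m E' = E'.
  by rewrite /E' mulmxBr -scalemxAr hDD hDG.
have hJEJ i j : Jm j *m E' *m (Jm i)^T =
    (if j == i then P j else 0) - c^-1 *: (P j *m P i).
  rewrite /E' mulmxBr mulmxBl -scalemxAr -scalemxAl hJD -mulmxA JJ.
  rewrite /G mulmxA hJW -mulmxA hWJ.
  by case: (j == i); rewrite ?mulmx1 ?mulmx0.
pose k := 1 - c^-1.
have ek : k = (c - 1) / c by rewrite /k; field.
have k0 : k != 0 by rewrite ek mulf_neq0 // invr_eq0.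
pose A i := E' *m (Jm i)^T *m P i.
have hAt i : (A i)^T = P i *m Jm i *m E'.
  by rewrite /A !trmx_mul Ps trmxK hE't mulmxA.
have hAAd i : (A i)^T *m A i = k *: P i.
  have -> : (A i)^T *m A i = P i *m (Jm i *m E' *m (Jm i)^T) *m P i.
    by rewrite hAt /A !mulmxA -(mulmxA _ E' E') hE'E' ?mulmxA.
  rewrite hJEJ eqxx mulmxBr mulmxBl -scalemxAr scalemxAl !PP.
  by rewrite -!scalemxAl !PP /k scalerBl scale1r.
have hAAo i j : i != j -> (A j)^T *m A i = - (c^-1 *: (P j *m P i)).
  move=> hij.
  have -> : (A j)^T *m A i = P j *m (Jm j *m E' *m (Jm i)^T) *m P i.
    by rewrite hAt /A !mulmxA -(mulmxA _ E' E') hE'E' ?mulmxA.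
  rewrite hJEJ eq_sym (negbTE hij) sub0r mulmxN mulNmx -scalemxAr -scalemxAl.
  by rewrite mulmxA PP -mulmxA PP.
have hE'A i : E' *m A i = A i by rewrite /A !mulmxA hE'E'.
have hAP i : A i *m P i = A i by rewrite /A -mulmxA PP.
pose P' i := k^-1 *: (A i *m (A i)^T).
pose Q i := E' - P' i.
have hP't i : (P' i)^T = P' i by rewrite /P' linearZ /= trmx_mul trmxK.
have hP'P' i : P' i *m P' i = P' i.
  rewrite /P' -scalemxAl -scalemxAr scalerA.
  have -> : A i *m (A i)^T *m (A i *m (A i)^T) = A i *m ((A i)^T *m A i) *m (A i)^T
    by rewrite !mulmxA.
  rewrite hAAd -scalemxAr -scalemxAl hAP scalerA.
  by rewrite -mulrA mulVf // mulr1.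
have hE'P' i : E' *m P' i = P' i by rewrite /P' -scalemxAr mulmxA hE'A.
have hP'E' i : P' i *m E' = P' i.
  by rewrite -{1}hP't -{1}hE't -trmx_mul hE'P' hP't.
have htrD : \tr D = c * \tr E.
  rewrite -mxtraceZ -sP /D !raddf_sum; apply: eq_bigr => i _ /=.
  by rewrite mxtrace_mulC mulmxA JJ eqxx mul1mx.
have htrG : \tr G = c * \tr E by rewrite /G mxtrace_mulC hWW mxtraceZ.
have htrE' : \tr E' = (c - 1) * \tr E.
  by rewrite /E' raddfB /= mxtraceZ htrD htrG; field.
have htrP' i : \tr (P' i) = \tr (P i).
  by rewrite /P' mxtraceZ mxtrace_mulC hAAd mxtraceZ mulrA mulVf // mul1r.
have hSA : \sum_i A i *m (A i)^T = E'.
  transitivity (E' *m D *m E'); last by rewrite -mulmxA hDE' hE'E'.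
  rewrite /D mulmx_sumr mulmx_suml; apply: eq_bigr => i _.
  by rewrite hAt /A !mulmxA -(mulmxA _ (P i) (P i)) PP.
have ekinv : k^-1 = c / (c - 1).
  by rewrite ek; field; rewrite c1' c0.
have htrPP i j : i != j -> \tr (P' i *m P' j) = \tr (P i *m P j) / (c-1)^+2.
  move=> hij.
  rewrite /P' -scalemxAl -scalemxAr !mxtraceZ.
  have -> : A i *m (A i)^T *m (A j *m (A j)^T) = (A i *m ((A i)^T *m A j)) *m (A j)^T
    by rewrite !mulmxA.
  rewrite mxtrace_mulC (mulmxA (A j)^T) hAAo // hAAo 1?eq_sym //.
  rewrite mulNmx mulmxN opprK -scalemxAl -scalemxAr !mxtraceZ.
  have -> : P j *m P i *m (P i *m P j) = P j *m (P i *m P i) *m P j by rewrite !mulmxA.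
  rewrite PP mxtrace_mulC mulmxA PP mxtrace_mulC ekinv.
  by field; rewrite c1' c0.
have hSP : \sum_i P' i = k^-1 *: E' by rewrite /P' -scaler_sumr hSA.
clearbody E' P'.
exists E', Q; split.
- by move=> i; rewrite /Q linearB /= hE't hP't.
- move=> i; rewrite /Q mulmxBl (mulmxBr E') (mulmxBr (P' i)) hE'E' hE'P' hP'E' hP'P'.
  by rewrite subrr subr0.
- by move=> i; rewrite /Q (mulmxBr E') hE'E' hE'P'.
- exact: htrE'.
split.
- rewrite /Q sumrB sumr_const card_ord hSP ekinv.
  by rewrite scalerBl scaler_nat.
- by move=> i; rewrite /Q raddfB /= htrE' htrP'.
- move=> i j hij; rewrite /Q mulmxBl (mulmxBr E') (mulmxBr (P' i)) hE'E' hE'P' hP'E'.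
  by rewrite !raddfB /= htrE' !htrP' htrPP //; ring.
Qed.
Definition av {R : ringType} (d : nat) : R := (d./2)%:R - (-1) ^+ d.
Definition bv {R : ringType} (d : nat) : R := (d./2)%:R.

Lemma dsplit (R : realFieldType) d : exists2 h : R, 0 <= h &
  ((d%:R = 2 * h /\ (d./2)%:R = h /\ (-1) ^+ d = 1 :> R /\ odd d = false) \/
   (d%:R = 2 * h + 1 /\ (d./2)%:R = h /\ (-1) ^+ d = -1 :> R /\ odd d = true)).
Proof.
exists (d./2)%:R; first exact: ler0n.
have := odd_double_half d; rewrite -signr_odd.
case: (odd d) => /= e.
- right; split; last by [].
  by rewrite -{1}e natrD -muln2 natrM mulrC addrC.
- left; split; last by [].
  by rewrite -{1}e add0n -muln2 natrM mulrC.
Qed.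

Lemma arith (R : realFieldType) d :
  let D := (d.+2)%:R : R in let c := 2 - D^-1 in
  [/\ c != 0, c != 1, (c - 1) * D = (d.+1)%:R,
      4 - c / (c - 1) = 2 - (d.+1)%:R^-1 &
   [/\ (d.+1)%:R - av d.+2 = av d.+1 :> R, (d.+1)%:R - bv d.+2 = bv d.+1 :> R,
     (c - 1) ^+ 2 * (3^-1 * (1 - (d.+1)%:R^-1) * av d.+1 - ((c - 1) * D - av d.+2 - bv d.+2))
       = 3^-1 * (1 - D^-1) * av d.+2 &
     (c - 1) ^+ 2 * (2^-1 * (1 - (d.+1)%:R^-1) * (bv d.+1 - 3^-1 * av d.+1)
        - ((c - 1) * D - bv d.+2 - bv d.+2))
       = 2^-1 * (1 - D^-1) * (bv d.+2 - 3^-1 * av d.+2)]].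
Proof.
move=> D c; rewrite /c /D /av /bv.
have -> : (d.+2)./2 = (d./2).+1 by [].
have -> : (d.+1)./2 = (odd d + d./2)%N by rewrite /= uphalf_half.
rewrite -(addn2 d) -(addn1 d) !natrD !exprD expr1 expr2 mulrNN mulr1 !mulr1 -(addn1 (d./2)) natrD.
have x0 : 0 <= (d%:R : R) := ler0n _ _.
have hu : (d%:R + 2)^-1 * (d%:R + 2) = 1 :> R by rewrite mulVf // gt_eqF //; lra.
split; [by apply/eqP => H; nra | by apply/eqP => H; nra | | | split].
all: have [h h0 [[e1 [e2 [e3 e4]]]|[e1 [e2 [e3 e4]]]]] := dsplit R d; rewrite e1 ?e2 ?e3 ?e4 /=.
all: field.
all: rewrite ?(gt_eqF (_ : 0 < 2 * h + 2)) ?(gt_eqF (_ : 0 < 2 * h + 1)) ?(gt_eqF (_ : 0 < 2 * h + 1 + 2)) ?(gt_eqF (_ : 0 < 2 * h + 1 + 1)) //.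
all: lra.
Qed.

Lemma gen (R : realFieldType) d : (0 < d)%N ->
  forall m (E : 'M[R]_m) (P : 'I_4 -> 'M[R]_m),
  (forall i, (P i)^T = P i) -> (forall i, P i *m P i = P i) ->
  (forall i, E *m P i = P i) ->
  \tr E = d%:R -> \sum_i P i = (2 - d%:R^-1) *: E ->
  \tr (P 0) = av d -> (forall i, i != 0 -> \tr (P i) = bv d) ->
  (forall i, i != 0 -> \tr (P 0 *m P i) = 3^-1 * (1 - d%:R^-1) * av d) /\
  (forall i j, i != 0 -> j != 0 -> i != j ->
     \tr (P i *m P j) = 2^-1 * (1 - d%:R^-1) * (bv d - 3^-1 * av d)).
Proof.
elim: d => [//|[|d] IH] _ m E P Ps PP EP trE sP tr0 tri.
- have Pz i : i != 0 -> P i = 0.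
    by move=> hi; apply: tr_sym_idem0; rewrite ?tri // /bv /=.
  have r0 : (1 - (1%:R : R)^-1) = 0 by rewrite mulr1n invr1 subrr.
  split => [i hi|i j hi hj _]; rewrite r0 mulr0 mul0r.
    by rewrite (Pz i hi) mulmx0 mxtrace0.
  by rewrite (Pz i hi) mul0mx mxtrace0.
- move: (arith R d) => /= [c0 c1 ecD ec4 [ea eb e1 e2]].
  have [E' [Q [Qs QQ EQ trE' [sQ trQ trQQ]]]] := step c0 c1 Ps PP EP sP.
  rewrite trE ecD in trE'; rewrite ec4 in sQ.
  have [H1 H2] := IH isT _ E' Q Qs QQ EQ trE' sQ
     (ltac:(by rewrite trQ trE ecD tr0 ea))
     (ltac:(by move=> i hi; rewrite trQ trE ecD tri // eb)).
  have key i j : i != j -> \tr (P i *m P j) =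
      (1 - (d.+2)%:R^-1) ^+ 2 * (\tr (Q i *m Q j)
         - ((1 - (d.+2)%:R^-1) * (d.+2)%:R - \tr (P i) - \tr (P j))).
    move=> hij; rewrite trQQ // trE.
    field; have x0 : 0 <= (d%:R : R) := ler0n _ _.
    by rewrite (gt_eqF (_ : 0 < 2 + d%:R)) ?(gt_eqF (_ : 0 < 2 + d%:R - 1)) //; lra.
  split.
  + move=> i hi; rewrite key 1?eq_sym // H1 // tr0 tri //.
    by rewrite -e1; ring.
  + move=> i j hi hj hij; rewrite key // H2 // !tri //.
    by rewrite -e2; ring.
Qed.

Lemma rank_tr (R : realFieldType) n (P : 'M[R]_n) (v : int) :
  (\rank P)%:Z = v -> P *m P = P -> \tr P = v%:~R.
Proof. by move=> <- PP; rewrite trace_idem. Qed.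

(* P 0, P 1, P 2, P 3 stand for the paper's P_1, P_2, P_3, P_4. *)
Theorem mainTheorem3 (R : realType) (n : nat) (P : 'I_4 -> 'M[R]_n) :
  (0 < n)%N ->
  (forall i, orth_proj (P i)) ->
  \sum_(i < 4) P i = (2 - n%:R^-1)%:M ->
  (\rank (P 0))%:Z = (n./2)%:Z - (-1) ^+ n ->
  (forall i : 'I_4, i != 0 -> (\rank (P i))%:Z = (n./2)%:Z) ->
  irreducible_family P ->
  ntrace (P 0) = 2^-1 - (1 + 3 * (-1) ^+ n) / (4 * n%:R)
  /\ (forall i : 'I_4, i != 0 ->
        ntrace (P i) = 2^-1 - (1 - (-1) ^+ n) / (4 * n%:R))
  /\ (forall i : 'I_4, i != 0 ->
        ntrace (P 0 *m P i) = 3^-1 * (1 - n%:R^-1) * ntrace (P 0))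
  /\ (forall i j : 'I_4, i != 0 -> j != 0 -> i != j ->
        ntrace (P i *m P j)
          = 2^-1 * (1 - n%:R^-1) * (ntrace (P i) - 3^-1 * ntrace (P 0))).
Proof.
move=> n0 Hp hsum r0 ri _.
have Ps i : (P i)^T = P i := (Hp i).1.
have PP i : P i *m P i = P i := (Hp i).2.
have tr0 : \tr (P 0) = av n.
  rewrite (rank_tr r0 (PP 0)) /av rmorphB /= rmorph_sign.
  by rewrite -[_%:~R]/((1 : R) *~ (n./2)%:Z) pmulrn.
have tri i : i != 0 -> \tr (P i) = bv n.
  by move=> hi; rewrite (rank_tr (ri i hi) (PP i)) /bv -[_%:~R]/((1 : R) *~ (n./2)%:Z) pmulrn.
have [H1 H2] := gen n0 Ps PP (fun i => mul1mx (P i)) (mxtrace1 _ _)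
  (ltac:(by rewrite hsum scalemx1)) tr0 tri.
have nR : (n%:R : R) != 0 by rewrite pnatr_eq0 -lt0n.
have hn : (0 : R) < n%:R by rewrite ltr0n.
split; [|split; [|split]].
- rewrite /ntrace tr0 /av.
  have [h h0 [[e1 [e2 [e3 e4]]]|[e1 [e2 [e3 e4]]]]] := dsplit R n; rewrite e1 e2 e3 in hn *; field; rewrite gt_eqF //; lra.
- move=> i hi; rewrite /ntrace tri // /bv.
  have [h h0 [[e1 [e2 [e3 e4]]]|[e1 [e2 [e3 e4]]]]] := dsplit R n;
    rewrite e1 e2 e3 in hn *; field; rewrite gt_eqF //; lra.
- move=> i hi; by rewrite /ntrace H1 // tr0; field; rewrite ?nR.
- by move=> i j hi hj hij; rewrite /ntrace H2 // tri // tr0; field; rewrite ?nR.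
Qed.
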